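(* Let $F\in\mathbb{R}^{K\times n}$ be a class indicator matrix, let $W\in\mathbb{R}^{r\times n}$ ($r\le n$) be an entrywise nonnegative similarity matrix with all column sums positive, $S=\operatorname{diag}(\mathbf{1}^TW)$, and $\tilde W=WS^{-1}$. Assume $\tilde W$ has full row rank $r$ and let $X^*=F\tilde W^T(\tilde W\tilde W^T)^{-1}$. Then each column of $X^*$ sums to one: $\mathbf{1}^TX^*=\mathbf{1}^T$.
   Context: $\mathbf{1}$ denotes the all-ones vector of appropriate length. The columns of $F$ are standard basis vectors $e_k\in\mathbb{R}^K$, $F_j=e_k$ meaning training sample $j$ is in class $k$. $W_{ij}$ is the similarity (e.g. a Gaussian kernel value $\exp\{-\|G_i-A_j\|_2^2/(2\sigma^2)\}$) between the $i$th basis vector $G_i$ and the $j$th training sample $A_j$; thus each column of $\tilde W$ sums to one. $X^*$ is the minimizer of the normalized RBF network objective $\|F-X\tilde W\|_F^2$. *)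

(* Defs.v *)
From mathcomp Require Import all_boot all_order all_algebra.
Set Implicit Arguments. Unset Strict Implicit. Unset Printing Implicit Defensive.
Import Order.TTheory GRing.Theory Num.Theory.
Local Open Scope ring_scope.

Definition class_indicator (R : ringType) (K n : nat) (F : 'M[R]_(K, n)) : Prop :=
  forall j : 'I_n, exists k : 'I_K, forall i : 'I_K, F i j = (i == k)%:R.

Definition colsum_diag (R : ringType) (r n : nat) (W : 'M[R]_(r, n)) : 'M[R]_n :=
  diag_mx (const_mx 1 *m W).

Definition Wtilde (R : comUnitRingType) (r n : nat) (W : 'M[R]_(r, n)) : 'M[R]_(r, n) :=
  W *m invmx (colsum_diag W).

Definition Xstar (R : comUnitRingType) (K r n : nat) (F : 'M[R]_(K, n))
  (W : 'M[R]_(r, n)) : 'M[R]_(K, r) :=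
  F *m (Wtilde W)^T *m invmx (Wtilde W *m (Wtilde W)^T).

(* Main.v *)
Require Import Defs.
From mathcomp Require Import all_boot all_order all_algebra.
Import Order.TTheory GRing.Theory Num.Theory.
Local Open Scope ring_scope.

Lemma AAT0 (R : realFieldType) m p (A : 'M[R]_(m, p)) : A *m A^T = 0 -> A = 0.
Proof.
move=> H; apply/matrixP => i j; rewrite mxE.
have := congr1 (fun M : 'M[R]_m => M i i) H; rewrite !mxE => /eqP.
under eq_bigr do rewrite mxE.
rewrite psumr_eq0; last by move=> k _; rewrite -expr2 sqr_ge0.
move/allP/(_ j (mem_index_enum _)) => /implyP /(_ isT).
by rewrite mulf_eq0 orbb => /eqP.
Qed.

Theorem lemma1 (R : realFieldType) (K r n : nat)
  (F : 'M[R]_(K, n)) (W : 'M[R]_(r, n))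
  (hF : class_indicator F)
  (hrn : (r <= n)%N)
  (hW0 : forall (i : 'I_r) (j : 'I_n), 0 <= W i j)
  (hWpos : forall j : 'I_n, 0 < \sum_(i < r) W i j)
  (hrank : \rank (Wtilde W) = r) :
  const_mx 1 *m Xstar F W = const_mx 1 :> 'rV[R]_r.
Proof.
set Wt := Wtilde W.
have h1F : const_mx 1 *m F = const_mx 1 :> 'rV[R]_n.
  apply/matrixP => i j; rewrite !mxE.
  have [k Hk] := hF j.
  under eq_bigr do rewrite mxE mul1r Hk.
  by rewrite (bigD1 k) //= eqxx big1 ?addr0 // => l /negbTE ->.
have Su : colsum_diag W \in unitmx.
  rewrite unitmxE det_diag unitfE; apply/prodf_neq0 => j _.
  rewrite !mxE; under eq_bigr do rewrite mxE mul1r.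
  by rewrite lt0r_neq0.
have h1W : const_mx 1 *m Wt = const_mx 1 :> 'rV[R]_n.
  rewrite /Wt /Wtilde mulmxA.
  apply: (canLR (mulmxK Su)).
  rewrite /colsum_diag mul_mx_diag; apply/matrixP => i j; rewrite !mxE mul1r.
  by apply: eq_bigr => k _; rewrite !mxE.
have Mu : Wt *m Wt^T \in unitmx.
  rewrite -row_free_unit -kermx_eq0; apply/eqP.
  set Kk := kermx _.
  have HK : Kk *m Wt *m Wt^T = 0 by rewrite -mulmxA mulmx_ker.
  have : Kk *m Wt *m (Kk *m Wt)^T = 0 by rewrite trmx_mul mulmxA HK mul0mx.
  move/AAT0/eqP; rewrite mulmx_free_eq0; first by move/eqP.
  by rewrite /row_free; apply/eqP; exact: hrank.
rewrite /Xstar -/Wt !mulmxA h1F -h1W -(mulmxA _ Wt).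
by rewrite mulmxK.
Qed.
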